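(* Let $\alpha$ be a tame power series and let $\mathbf B_\alpha$ be the Bernoulli operator built from any multi-power series expansion of $(-1)^\nu(\ln z)^\nu\alpha(z)$ as below. Then every polynomial function $P(t)$ lies in $\mathscr D(\mathbf B_\alpha)$ and $\mathbf B_\alpha P=\mathbf T_\alpha P$.
   Context: Let $(a_n)_{n\ge1}$ be complex numbers and $\alpha(z)=\sum_{n\ge0}a_{n+1}z^n$. For $N\ge1$, $\mathbf e\in\mathbb Z_{>0}^N$ let $\lambda_{\mathbf e}(z)=(z^{e_1},\dots,z^{e_N})$; a multi-power series around $1$ is a series $\sum_{\mathbf i\in\mathbb Z_{\ge0}^N}c_{\mathbf i}(\lambda_{\mathbf e}(z)-\mathbf 1)^{\mathbf i}$ with $\mathbf w^{\mathbf i}=\prod_jw_j^{i_j}$. $\alpha$ is tame if (1) it converges on the open unit disk; (2) it extends holomorphically to a punctured neighborhood of $z=1$ with a pole of order $\nu\ge0$ at $1$ ($\nu=0$: holomorphic at $1$); (3) on some open neighborhood of $(0,1]$, $(z-1)^\nu\alpha(z)$ equals a multi-power series around $1$ converging absolutely and uniformly there. For tame $\alpha$, $(-1)^\nu(\ln z)^\nu\alpha(z)$ then also has such an expansion $\sum_{\mathbf i}c_{\mathbf i}(\lambda_{\mathbf e}(z)-\mathbf 1)^{\mathbf i}$ converging absolutely and uniformly on a neighborhood of $(0,1]$; fix one. For functions $g$ on $(0,\infty)$ and $h>0$: $\mathbf E_hg(t)=g(t+h)$, $\Delta_h=\mathbf E_h-\mathrm{id}$, and $\Delta_{\mathbf e}^{\mathbf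 i}=\Delta_{e_1}^{i_1}\cdots\Delta_{e_N}^{i_N}$. The Bernoulli operator is $\mathbf B_\alpha=\sum_{\mathbf i}c_{\mathbf i}\Delta_{\mathbf e}^{\mathbf i}$; its domain $\mathscr D(\mathbf B_\alpha)$ consists of the functions $g:(0,\infty)\to\mathbb C$ for which $\sum_{\mathbf i}c_{\mathbf i}\Delta_{\mathbf e}^{\mathbf i}g(t)$ converges absolutely and locally uniformly in $t$, and $\mathbf B_\alpha g$ is the sum. Todd operator: write the Taylor expansion at $u=0$ of the function $u^\nu\alpha(e^{-u})$ (holomorphic near $u=0$) as $\sum_{k\ge0}b_ku^k$; for a polynomial $P$, $\mathbf T_\alpha P=\sum_{k\ge0}b_k(-1)^kP^{(k)}$ (a finite sum). *)

(* Defs.v *)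
From Stdlib Require Import Reals List.
Import ListNotations.
Open Scope R_scope.

Record Cplx := mkC { Re : R; Im : R }.

Definition RtoC (x : R) : Cplx := mkC x 0.
Definition Czero : Cplx := RtoC 0.
Definition Cone : Cplx := RtoC 1.
Definition Cadd (z w : Cplx) : Cplx := mkC (Re z + Re w) (Im z + Im w).
Definition Copp (z : Cplx) : Cplx := mkC (- Re z) (- Im z).
Definition Csub (z w : Cplx) : Cplx := Cadd z (Copp w).
Definition Cmul (z w : Cplx) : Cplx :=
  mkC (Re z * Re w - Im z * Im w) (Re z * Im w + Im z * Re w).
Definition Cinv (z : Cplx) : Cplx :=
  let d := Re z * Re z + Im z * Im z in mkC (Re z / d) (- Im z / d).
Definition Cdiv (z w : Cplx) : Cplx := Cmul z (Cinv w).
Definition Cnorm (z : Cplx) : R := sqrt (Re z * Re z + Im z * Im z).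
Fixpoint Cpow (z : Cplx) (n : nat) : Cplx :=
  match n with O => Cone | S m => Cmul z (Cpow z m) end.

Definition Cexp (z : Cplx) : Cplx := mkC (exp (Re z) * cos (Im z)) (exp (Re z) * sin (Im z)).

(* principal argument in (-PI, PI] and principal logarithm *)
Definition Carg (z : Cplx) : R :=
  if Rlt_dec 0 (Re z) then atan (Im z / Re z)
  else if Rlt_dec (Re z) 0 then
    (if Rle_dec 0 (Im z) then atan (Im z / Re z) + PI else atan (Im z / Re z) - PI)
  else if Rlt_dec 0 (Im z) then PI / 2
  else if Rlt_dec (Im z) 0 then - (PI / 2) else 0.
Definition Cln (z : Cplx) : Cplx := mkC (ln (Cnorm z)) (Carg z).

Definition Cseq_lim (u : nat -> Cplx) (l : Cplx) : Prop :=
  forall eps, 0 < eps -> exists M, forall n, (M <= n)%nat -> Cnorm (Csub (u n) l) < eps.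

(* partial sum f 0 + ... + f (n-1) *)
Fixpoint Cpsum (f : nat -> Cplx) (n : nat) : Cplx :=
  match n with O => Czero | S m => Cadd (Cpsum f m) (f m) end.

Definition Cseries_sum (f : nat -> Cplx) (S : Cplx) : Prop := Cseq_lim (Cpsum f) S.

Definition Cdifferentiable (f : Cplx -> Cplx) (z : Cplx) : Prop :=
  exists l : Cplx, forall eps, 0 < eps -> exists delta, 0 < delta /\
    forall h, 0 < Cnorm h < delta ->
      Cnorm (Csub (Cdiv (Csub (f (Cadd z h)) (f z)) h) l) < eps.

Definition Copen (U : Cplx -> Prop) : Prop :=
  forall z, U z -> exists delta, 0 < delta /\ forall w, Cnorm (Csub w z) < delta -> U w.

Definition nbhd_0_1 (U : Cplx -> Prop) : Prop :=
  Copen U /\ forall x, 0 < x <= 1 -> U (RtoC x).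

(* a multi-index i in Z_{>=0}^N is a list nat of length N *)
Fixpoint boxidx (N M : nat) : list (list nat) :=
  match N with
  | O => [ [] ]
  | S n => flat_map (fun k => map (cons k) (boxidx n M)) (seq 0 (S M))
  end.

Definition CsumL {A} (l : list A) (g : A -> Cplx) : Cplx :=
  fold_right (fun i acc => Cadd (g i) acc) Czero l.
Definition RsumL {A} (l : list A) (g : A -> R) : R :=
  fold_right (fun i acc => g i + acc) 0 l.

(* A multi-series sum_i T i x (i ranging over Z_{>=0}^N) converges absolutely
   and uniformly on W to S: the absolute series has uniformly small tails, and
   the (box) partial sums converge to S x for each x in W. *)
Definition multi_conv_abs_unif {X : Type} (N : nat) (T : list nat -> X -> Cplx)
    (W : X -> Prop) (S : X -> Cplx) : Prop :=
  (forall eps, 0 < eps -> exists M, forall M' x, (M <= M')%nat -> W x ->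
      RsumL (boxidx N M') (fun i => Cnorm (T i x))
      - RsumL (boxidx N M) (fun i => Cnorm (T i x)) < eps)
  /\ (forall x, W x -> Cseq_lim (fun M => CsumL (boxidx N M) (fun i => T i x)) (S x)).

(* (lambda_e(z) - 1)^i = prod_j (z^{e_j} - 1)^{i_j} *)
Definition lam_mono (e i : list nat) (z : Cplx) : Cplx :=
  fold_right (fun p acc => Cmul (Cpow (Csub (Cpow z (fst p)) Cone) (snd p)) acc)
    Cone (combine e i).

Definition exponent_vector (N : nat) (e : list nat) : Prop :=
  (1 <= N)%nat /\ length e = N /\ Forall (fun k => (0 < k)%nat) e.

Definition Ceq_dec (z w : Cplx) : {z = w} + {z <> w}.
Proof.
  destruct z as [x y], w as [x' y'].
  destruct (Req_EM_T x x') as [H1|H1]; destruct (Req_EM_T y y') as [H2|H2].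
  - left; subst; reflexivity.
  - right; intro H; inversion H; contradiction.
  - right; intro H; inversion H; contradiction.
  - right; intro H; inversion H; contradiction.
Defined.

Definition pole_ext (F : Cplx -> Cplx) (nu : nat) (L : Cplx) (z : Cplx) : Cplx :=
  if Ceq_dec z Cone then L else Cmul (Cpow (Csub z Cone) nu) (F z).

(* alpha(z) = sum_{n>=0} a (n+1) z^n ; (a n)_{n>=1}; a 0 is unused. *)
Definition alpha_term (a : nat -> Cplx) (z : Cplx) : nat -> Cplx :=
  fun n => Cmul (a (S n)) (Cpow z n).

Definition in_disk (z : Cplx) : Prop := Cnorm z < 1.
Definition in_ball1 (r : R) (z : Cplx) : Prop := Cnorm (Csub z Cone) < r.

(* tame_data a F nu r L :
   F is the holomorphic extension of alpha to (disk) U (B(1,r) \ {1}),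
   with a pole of order nu at 1: z |-> (z-1)^nu F z extends holomorphically
   to B(1,r) with value L at 1 (L <> 0 when nu > 0);
   and (z-1)^nu alpha(z) is a multi-power series around 1 on a neighbourhood
   of (0,1]. *)
Definition tame_data (a : nat -> Cplx) (F : Cplx -> Cplx) (nu : nat) (r : R) (L : Cplx) : Prop :=
  (forall z, in_disk z -> Cseries_sum (alpha_term a z) (F z)) /\
  0 < r /\
  (forall z, in_ball1 r z -> z <> Cone -> Cdifferentiable F z) /\
  (forall z, in_ball1 r z -> Cdifferentiable (pole_ext F nu L) z) /\
  ((0 < nu)%nat -> L <> Czero) /\
  (exists (U : Cplx -> Prop) (N : nat) (e : list nat) (d : list nat -> Cplx),
      nbhd_0_1 U /\ (forall z, U z -> in_disk z \/ in_ball1 r z) /\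
      exponent_vector N e /\
      multi_conv_abs_unif N (fun i z => Cmul (d i) (lam_mono e i z)) U
        (pole_ext F nu L)).

Definition tame (a : nat -> Cplx) : Prop :=
  exists F nu r L, tame_data a F nu r L.

(* functions on (0,oo) are modelled as R -> Cplx; only values at t > 0 matter *)
Definition Delta (h : R) (g : R -> Cplx) : R -> Cplx := fun t => Csub (g (t + h)) (g t).
Fixpoint Delta_pow (h : R) (n : nat) (g : R -> Cplx) : R -> Cplx :=
  match n with O => g | S m => Delta h (Delta_pow h m g) end.
(* Delta_e^i g = Delta_{e_1}^{i_1} ... Delta_{e_N}^{i_N} g *)
Definition Delta_multi (e i : list nat) (g : R -> Cplx) : R -> Cplx :=
  fold_right (fun p acc => Delta_pow (INR (fst p)) (snd p) acc) g (combine e i).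

(* B_alpha g = Bg : sum_i c_i Delta_e^i g(t) converges absolutely and locally
   uniformly in t in (0,oo), with sum Bg t.  g is in the domain of B_alpha
   iff such Bg exists (it is then unique on (0,oo)). *)
Definition bernoulli_op_value (N : nat) (e : list nat) (c : list nat -> Cplx)
    (g : R -> Cplx) (Bg : R -> Cplx) : Prop :=
  forall t0, 0 < t0 -> exists delta, 0 < delta /\
    multi_conv_abs_unif N (fun i t => Cmul (c i) (Delta_multi e i g t))
      (fun t => 0 < t /\ Rabs (t - t0) < delta) Bg.

Definition in_bernoulli_domain (N : nat) (e : list nat) (c : list nat -> Cplx)
    (g : R -> Cplx) : Prop := exists Bg, bernoulli_op_value N e c g Bg.

(* p = [p_0; p_1; ...] represents sum_k p_k t^k *)
Fixpoint Peval_aux (p : list Cplx) (t : Cplx) : Cplx :=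
  match p with [] => Czero | q :: p' => Cadd q (Cmul t (Peval_aux p' t)) end.
Definition Peval (p : list Cplx) (t : R) : Cplx := Peval_aux p (RtoC t).

Fixpoint Pderiv_aux (p : list Cplx) (k : nat) : list Cplx :=
  match p with [] => [] | q :: p' => Cmul (RtoC (INR k)) q :: Pderiv_aux p' (S k) end.
Definition Pderiv (p : list Cplx) : list Cplx := Pderiv_aux (tl p) 1.
Fixpoint Pderiv_n (n : nat) (p : list Cplx) : list Cplx :=
  match n with O => p | S m => Pderiv (Pderiv_n m p) end.

(* Todd operator: T_alpha P = sum_k b_k (-1)^k P^(k) (finite: P^(k) = 0 for
   k >= length p) *)
Definition todd_op (b : nat -> Cplx) (p : list Cplx) : R -> Cplx :=
  fun t => Cpsum (fun k => Cmul (Cmul (b k) (Cpow (RtoC (-1)) k))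
                                (Peval (Pderiv_n k p) t)) (S (length p)).

Definition taylor_coeffs_at0 (F : Cplx -> Cplx) (nu : nat) (b : nat -> Cplx) : Prop :=
  exists rho, 0 < rho /\ forall u, 0 < Cnorm u < rho ->
    Cseries_sum (fun k => Cmul (b k) (Cpow u k)) (Cmul (Cpow u nu) (F (Cexp (Copp u)))).

(* Main.v *)
From Coquelicot Require Import Coquelicot.
Require Import Defs.
From Stdlib Require Import Reals List.
From Stdlib Require Import Lra Lia FunctionalExtensionality.
Open Scope R_scope.

Lemma Cext : forall z w : Cplx, Re z = Re w -> Im z = Im w -> z = w.
Proof. intros [a b] [c d]; simpl; intros -> ->; reflexivity. Qed.

Ltac cunf := unfold Csub, Cadd, Copp, Cmul, Czero, Cone, RtoC in *.
Ltac csolve := intros; apply Cext; cunf; simpl; ring.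

Lemma Cring : ring_theory Czero Cone Cadd Cmul Csub Copp (@eq Cplx).
Proof. constructor; csolve. Qed.
Add Ring CplxRing : Cring.

Lemma RtoC_add x y : RtoC (x + y) = Cadd (RtoC x) (RtoC y). Proof. csolve. Qed.
Lemma RtoC_mul x y : RtoC (x * y) = Cmul (RtoC x) (RtoC y). Proof. csolve. Qed.
Lemma RtoC_opp x : RtoC (- x) = Copp (RtoC x). Proof. csolve. Qed.
Lemma RtoC_sub x y : RtoC (x - y) = Csub (RtoC x) (RtoC y). Proof. csolve. Qed.
Lemma Cpow_RtoC x n : Cpow (RtoC x) n = RtoC (x ^ n).
Proof. induction n; simpl. reflexivity. rewrite IHn, RtoC_mul; reflexivity. Qed.
Lemma Cpow_mul z w n : Cpow (Cmul z w) n = Cmul (Cpow z n) (Cpow w n).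
Proof. induction n; simpl. ring. rewrite IHn; ring. Qed.

Definition toC (z : Cplx) : Complex.C := (Re z, Im z).
Lemma Cnorm_Cmod z : Cnorm z = Cmod (toC z).
Proof. unfold Cnorm, Cmod, toC; simpl; f_equal; ring. Qed.
Lemma Cnorm_ge0 z : 0 <= Cnorm z.
Proof. rewrite Cnorm_Cmod; apply Cmod_ge_0. Qed.
Lemma Cnorm_triang z w : Cnorm (Cadd z w) <= Cnorm z + Cnorm w.
Proof. rewrite !Cnorm_Cmod. apply (Cmod_triangle (toC z) (toC w)). Qed.
Lemma Cnorm_mul z w : Cnorm (Cmul z w) = Cnorm z * Cnorm w.
Proof. rewrite !Cnorm_Cmod. apply (Cmod_mult (toC z) (toC w)). Qed.
Lemma Cnorm_RtoC x : Cnorm (RtoC x) = Rabs x.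
Proof. rewrite Cnorm_Cmod. apply Cmod_R. Qed.
Lemma Cnorm_opp z : Cnorm (Copp z) = Cnorm z.
Proof. unfold Cnorm, Copp; simpl; f_equal; ring. Qed.
Lemma Cnorm_sub_sym z w : Cnorm (Csub z w) = Cnorm (Csub w z).
Proof. replace (Csub z w) with (Copp (Csub w z)) by ring. apply Cnorm_opp. Qed.
Lemma Cnorm_triang_sub z w : Cnorm (Csub z w) <= Cnorm z + Cnorm w.
Proof. unfold Csub. rewrite <- (Cnorm_opp w). apply Cnorm_triang. Qed.
Lemma Cnorm_pow z n : Cnorm (Cpow z n) = Cnorm z ^ n.
Proof. induction n; simpl. unfold Cone; rewrite Cnorm_RtoC; apply Rabs_R1. rewrite Cnorm_mul, IHn; reflexivity. Qed.
Lemma Cnorm_zero : Cnorm Czero = 0.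
Proof. unfold Czero; rewrite Cnorm_RtoC; apply Rabs_R0. Qed.
Lemma Cnorm_eq0 z : Cnorm z = 0 -> z = Czero.
Proof. rewrite Cnorm_Cmod; intro H. apply Cmod_eq_0 in H. unfold toC in H.
 injection H; intros; apply Cext; simpl; auto. Qed.
Lemma Cnorm_le_triang3 a b c : Cnorm (Csub a c) <= Cnorm (Csub a b) + Cnorm (Csub b c).
Proof. replace (Csub a c) with (Cadd (Csub a b) (Csub b c)) by ring. apply Cnorm_triang. Qed.

Fixpoint Rpsum (f : nat -> R) (n : nat) : R :=
  match n with O => 0 | S m => Rpsum f m + f m end.

Lemma Cpsum_ext f g n : (forall k, (k < n)%nat -> f k = g k) -> Cpsum f n = Cpsum g n.
Proof. induction n; intros H; simpl; auto. rewrite IHn, H; auto. Qed.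
Lemma Rpsum_ext f g n : (forall k, (k < n)%nat -> f k = g k) -> Rpsum f n = Rpsum g n.
Proof. induction n; intros H; simpl; auto. rewrite IHn, H; auto. Qed.
Lemma Cpsum_add f g n : Cpsum (fun k => Cadd (f k) (g k)) n = Cadd (Cpsum f n) (Cpsum g n).
Proof. induction n; simpl. csolve. rewrite IHn; ring. Qed.
Lemma Cpsum_sub f g n : Cpsum (fun k => Csub (f k) (g k)) n = Csub (Cpsum f n) (Cpsum g n).
Proof. induction n; simpl. csolve. rewrite IHn; ring. Qed.
Lemma Cpsum_scal a f n : Cpsum (fun k => Cmul a (f k)) n = Cmul a (Cpsum f n).
Proof. induction n; simpl. csolve. rewrite IHn; ring. Qed.
Lemma Cpsum_zero n : Cpsum (fun _ => Czero) n = Czero.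
Proof. induction n; simpl; auto. rewrite IHn; ring. Qed.
Lemma Cpsum_shift f n : Cpsum f (S n) = Cadd (f O) (Cpsum (fun k => f (S k)) n).
Proof. induction n; simpl. ring. simpl in IHn. rewrite IHn. ring. Qed.
Lemma Rpsum_shift f n : Rpsum f (S n) = f O + Rpsum (fun k => f (S k)) n.
Proof. induction n; simpl. ring. simpl in IHn. rewrite IHn. ring. Qed.
Lemma Cpsum_tail f n m : (n <= m)%nat -> (forall k, (n <= k < m)%nat -> f k = Czero) ->
  Cpsum f m = Cpsum f n.
Proof. induction 1 as [|m Hle IH]; intros Hf; auto. simpl. rewrite Hf by lia. rewrite IH by (intros; apply Hf; lia). ring. Qed.
Lemma Cpsum_norm f n : Cnorm (Cpsum f n) <= Rpsum (fun k => Cnorm (f k)) n.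
Proof. induction n; simpl. rewrite Cnorm_zero; lra.
 eapply Rle_trans. apply Cnorm_triang. lra. Qed.
Lemma Rpsum_le f g n : (forall k, (k < n)%nat -> f k <= g k) -> Rpsum f n <= Rpsum g n.
Proof. induction n; intros H; simpl. lra. assert (f n <= g n) by auto. assert (Rpsum f n <= Rpsum g n) by auto. lra. Qed.
Lemma Rpsum_ge0 f n : (forall k, (k < n)%nat -> 0 <= f k) -> 0 <= Rpsum f n.
Proof. induction n; intros H; simpl. lra. assert (0 <= f n) by auto. assert (0 <= Rpsum f n) by auto. lra. Qed.
Lemma Rpsum_scal a f n : Rpsum (fun k => a * f k) n = a * Rpsum f n.
Proof. induction n; simpl. ring. rewrite IHn; ring. Qed.
Lemma Rpsum_add f g n : Rpsum (fun k => f k + g k) n = Rpsum f n + Rpsum g n.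
Proof. induction n; simpl. ring. rewrite IHn; ring. Qed.
Lemma Re_Cpsum f n : Re (Cpsum f (S n)) = sum_f_R0 (fun k => Re (f k)) n.
Proof. induction n. simpl. cunf; simpl; ring. change (Re (Cadd (Cpsum f (S n)) (f (S n))) = sum_f_R0 (fun k => Re (f k)) n + Re (f (S n))). rewrite <- IHn. reflexivity. Qed.
Lemma Im_Cpsum f n : Im (Cpsum f (S n)) = sum_f_R0 (fun k => Im (f k)) n.
Proof. induction n. simpl. cunf; simpl; ring. change (Im (Cadd (Cpsum f (S n)) (f (S n))) = sum_f_R0 (fun k => Im (f k)) n + Im (f (S n))). rewrite <- IHn. reflexivity. Qed.
Lemma Rpsum_RtoC f n : Cpsum (fun k => RtoC (f k)) n = RtoC (Rpsum f n).
Proof. induction n; simpl. reflexivity. rewrite IHn, RtoC_add; reflexivity. Qed.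

Lemma CsumL_app {A} (l1 l2 : list A) g : CsumL (l1 ++ l2) g = Cadd (CsumL l1 g) (CsumL l2 g).
Proof. induction l1; simpl. unfold CsumL; simpl; ring. unfold CsumL in *; simpl. rewrite IHl1. ring. Qed.
Lemma CsumL_cons {A} (a : A) l g : CsumL (a :: l) g = Cadd (g a) (CsumL l g).
Proof. reflexivity. Qed.
Lemma CsumL_nil {A} g : CsumL (@nil A) g = Czero.
Proof. reflexivity. Qed.
Lemma CsumL_map {A B} (h : A -> B) l g : CsumL (map h l) g = CsumL l (fun x => g (h x)).
Proof. induction l; auto. cbn [map]. rewrite !CsumL_cons, IHl; auto. Qed.
Lemma CsumL_flat_map {A B} (h : A -> list B) l g :
  CsumL (flat_map h l) g = CsumL l (fun x => CsumL (h x) g).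
Proof. induction l; auto. cbn [flat_map]. rewrite CsumL_app, CsumL_cons, IHl; auto. Qed.
Lemma CsumL_ext {A} (l : list A) f g : (forall x, In x l -> f x = g x) -> CsumL l f = CsumL l g.
Proof. induction l; intros H; auto. rewrite !CsumL_cons, IHl, H; simpl; auto. intros; apply H; simpl; auto. Qed.
Lemma CsumL_add {A} (l : list A) f g : CsumL l (fun x => Cadd (f x) (g x)) = Cadd (CsumL l f) (CsumL l g).
Proof. induction l. unfold CsumL; simpl; ring. rewrite !CsumL_cons, IHl; ring. Qed.
Lemma CsumL_sub {A} (l : list A) f g : CsumL l (fun x => Csub (f x) (g x)) = Csub (CsumL l f) (CsumL l g).
Proof. induction l. unfold CsumL; simpl; ring. rewrite !CsumL_cons, IHl; ring. Qed.
Lemma CsumL_scal {A} (l : list A) a f : CsumL l (fun x => Cmul a (f x)) = Cmul a (CsumL l f).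
Proof. induction l. unfold CsumL; simpl; ring. rewrite !CsumL_cons, IHl; ring. Qed.
Lemma CsumL_zero {A} (l : list A) f : (forall x, In x l -> f x = Czero) -> CsumL l f = Czero.
Proof. intros H. rewrite (CsumL_ext l f (fun _ => Czero)) by auto. clear H. induction l; auto. rewrite CsumL_cons, IHl. ring. Qed.
Lemma CsumL_Cpsum {A} (l : list A) f n :
  CsumL l (fun x => Cpsum (f x) n) = Cpsum (fun k => CsumL l (fun x => f x k)) n.
Proof. induction n; simpl. apply CsumL_zero; auto. rewrite CsumL_add, IHn. reflexivity. Qed.

Lemma RsumL_C {A} (l : list A) f : RsumL l f = Re (CsumL l (fun x => RtoC (f x))).
Proof. induction l; simpl; auto. rewrite IHl. reflexivity. Qed.
Lemma RsumL_cons {A} (a : A) l g : RsumL (a :: l) g = g a + RsumL l g.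
Proof. reflexivity. Qed.
Lemma RsumL_le {A} (l : list A) f g : (forall x, In x l -> f x <= g x) -> RsumL l f <= RsumL l g.
Proof. induction l; intros H; simpl. lra. assert (f a <= g a) by (apply H; simpl; auto).
 assert (RsumL l f <= RsumL l g) by (apply IHl; intros; apply H; simpl; auto). lra. Qed.
Lemma RsumL_ge0 {A} (l : list A) f : (forall x, In x l -> 0 <= f x) -> 0 <= RsumL l f.
Proof. induction l; intros H; simpl. lra. assert (0 <= f a) by (apply H; simpl; auto).
 assert (0 <= RsumL l f) by (apply IHl; intros; apply H; simpl; auto). lra. Qed.
Lemma RsumL_add {A} (l : list A) f g : RsumL l (fun x => f x + g x) = RsumL l f + RsumL l g.
Proof. induction l; simpl. ring. rewrite IHl; ring. Qed.
Lemma RsumL_scal {A} (l : list A) a f : RsumL l (fun x => a * f x) = a * RsumL l f.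
Proof. induction l; simpl. ring. rewrite IHl; ring. Qed.
Lemma CsumL_norm {A} (l : list A) g : Cnorm (CsumL l g) <= RsumL l (fun x => Cnorm (g x)).
Proof. induction l. unfold CsumL; simpl; rewrite Cnorm_zero; lra.
 rewrite CsumL_cons. eapply Rle_trans. apply Cnorm_triang. rewrite RsumL_cons. lra. Qed.

Lemma boxidx_S N M : boxidx (S N) M = flat_map (fun k => map (cons k) (boxidx N M)) (seq 0 (S M)).
Proof. reflexivity. Qed.
Lemma box_length N M i : In i (boxidx N M) -> length i = N.
Proof. revert i; induction N; intros i H.
 destruct H as [<-|[]]; reflexivity.
 rewrite boxidx_S in H. apply in_flat_map in H. destruct H as [k [_ Hk]]. apply in_map_iff in Hk.
 destruct Hk as [j [<- Hj]]. simpl. rewrite (IHN j Hj). reflexivity. Qed.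

Lemma CsumL_box_restr N M0 M (g : list nat -> Cplx) : (M0 <= M)%nat ->
  (forall i, length i = N -> (exists k, In k i /\ (M0 < k)%nat) -> g i = Czero) ->
  CsumL (boxidx N M) g = CsumL (boxidx N M0) g.
Proof. revert g; induction N; intros g HM Hg. reflexivity.
 rewrite !boxidx_S, !CsumL_flat_map.
 replace (S M) with (S M0 + (M - M0))%nat by lia. rewrite seq_app, CsumL_app.
 rewrite (CsumL_zero (seq (0 + S M0) (M - M0))). 2:{
   intros k Hk. apply in_seq in Hk. apply CsumL_zero. intros x Hx.
   apply in_map_iff in Hx. destruct Hx as [j [<- Hj]]. apply Hg.
   simpl; rewrite (box_length _ _ _ Hj); auto. exists k; split; simpl; auto; lia. }
 replace (Cadd _ Czero) with (CsumL (seq 0 (S M0)) (fun x => CsumL (map (cons x) (boxidx N M)) g)) by ring.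
 apply CsumL_ext. intros k _. rewrite !CsumL_map. apply IHN; auto.
 intros j Hj [k' [Hk' Hlt]]. apply Hg. simpl; rewrite Hj; auto. exists k'; split; simpl; auto.
Qed.

Lemma RsumL_box_restr N M0 M (g : list nat -> R) : (M0 <= M)%nat ->
  (forall i, length i = N -> (exists k, In k i /\ (M0 < k)%nat) -> g i = 0) ->
  RsumL (boxidx N M) g = RsumL (boxidx N M0) g.
Proof. intros HM Hg. rewrite !RsumL_C. f_equal. apply CsumL_box_restr; auto.
 intros; rewrite Hg; auto. Qed.

Definition DM (l : list (nat * nat)) (g : R -> Cplx) : R -> Cplx :=
  fold_right (fun p acc => Delta_pow (INR (fst p)) (snd p) acc) g l.
Definition LM (l : list (nat * nat)) (z : Cplx) : Cplx :=
  fold_right (fun p acc => Cmul (Cpow (Csub (Cpow z (fst p)) Cone) (snd p)) acc) Cone l.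
Definition Lsum (l : list (nat * nat)) : nat := fold_right (fun p acc => (snd p + acc)%nat) O l.
Definition Shift (l : list (nat * nat)) : R := fold_right (fun p acc => INR (fst p) * INR (snd p) + acc) 0 l.

Lemma DM_cons p l g : DM (p :: l) g = Delta_pow (INR (fst p)) (snd p) (DM l g).
Proof. reflexivity. Qed.

Lemma Delta_pow_add h n g1 g2 : Delta_pow h n (fun s => Cadd (g1 s) (g2 s)) =
  fun s => Cadd (Delta_pow h n g1 s) (Delta_pow h n g2 s).
Proof. induction n; simpl; auto. rewrite IHn. unfold Defs.Delta. apply functional_extensionality; intros; cbv beta; ring. Qed.
Lemma Delta_pow_scal h n a g : Delta_pow h n (fun s => Cmul a (g s)) =
  fun s => Cmul a (Delta_pow h n g s).
Proof. induction n; simpl; auto. rewrite IHn. unfold Defs.Delta. apply functional_extensionality; intros; cbv beta; ring. Qed.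
Lemma Delta_pow_zero h n : Delta_pow h n (fun _ => Czero) = fun _ => Czero.
Proof. induction n; simpl; auto. rewrite IHn. unfold Defs.Delta. apply functional_extensionality; intros; cbv beta; ring. Qed.
Lemma Delta_pow_shift h n c g : Delta_pow h n (fun s => g (c + s)) = fun s => Delta_pow h n g (c + s).
Proof. induction n; simpl; auto. rewrite IHn. unfold Defs.Delta. apply functional_extensionality; intros.
 rewrite Rplus_assoc; auto. Qed.

Lemma DM_add l g1 g2 : DM l (fun s => Cadd (g1 s) (g2 s)) = fun s => Cadd (DM l g1 s) (DM l g2 s).
Proof. induction l; auto. rewrite !DM_cons, IHl, Delta_pow_add. reflexivity. Qed.
Lemma DM_scal l a g : DM l (fun s => Cmul a (g s)) = fun s => Cmul a (DM l g s).
Proof. induction l; auto. rewrite !DM_cons, IHl, Delta_pow_scal. reflexivity. Qed.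
Lemma DM_zero l : DM l (fun _ => Czero) = fun _ => Czero.
Proof. induction l; auto. rewrite !DM_cons, IHl, Delta_pow_zero. reflexivity. Qed.
Lemma DM_shift l c g : DM l (fun s => g (c + s)) = fun s => DM l g (c + s).
Proof. induction l; auto. rewrite !DM_cons, IHl, Delta_pow_shift. reflexivity. Qed.
Lemma DM_sub l g1 g2 : DM l (fun s => Csub (g1 s) (g2 s)) = fun s => Csub (DM l g1 s) (DM l g2 s).
Proof. unfold Csub. rewrite DM_add.
 replace (fun s => Copp (g2 s)) with (fun s => Cmul (Copp Cone) (g2 s)) by (apply functional_extensionality; intros; ring).
 rewrite DM_scal. apply functional_extensionality; intros; ring. Qed.
Lemma DM_Cpsum l a g n :
  DM l (fun s => Cpsum (fun k => Cmul (a k) (g k s)) n) = fun s => Cpsum (fun k => Cmul (a k) (DM l (g k) s)) n.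
Proof. induction n; simpl. apply DM_zero. rewrite DM_add, IHn, DM_scal. reflexivity. Qed.
Lemma DM_ext l g1 g2 : (forall s, g1 s = g2 s) -> DM l g1 = DM l g2.
Proof. intros H; replace g1 with g2; auto. symmetry; apply functional_extensionality; auto. Qed.

Lemma Delta_pow_bound h n g X B : 0 <= h -> (forall s, 0 <= s <= X -> Cnorm (g s) <= B) ->
  forall s, 0 <= s <= X - INR n * h -> Cnorm (Delta_pow h n g s) <= 2 ^ n * B.
Proof. intros Hh Hg. induction n; intros s Hs; simpl.
 rewrite Rmult_1_l. apply Hg. simpl in Hs; lra.
 rewrite S_INR in Hs. unfold Defs.Delta. eapply Rle_trans. apply Cnorm_triang_sub.
 assert (0 <= INR n) by apply pos_INR.
 assert (Cnorm (Delta_pow h n g (s + h)) <= 2 ^ n * B) by (apply IHn; nra).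
 assert (Cnorm (Delta_pow h n g s) <= 2 ^ n * B) by (apply IHn; nra). lra. Qed.

Lemma DM_bound l g X B : (forall s, 0 <= s <= X -> Cnorm (g s) <= B) ->
  forall s, 0 <= s <= X - Shift l -> Cnorm (DM l g s) <= 2 ^ (Lsum l) * B.
Proof. induction l as [|[m n] l IH]; intros Hg s Hs.
 simpl in *. rewrite Rmult_1_l. apply Hg; lra.
 rewrite DM_cons; simpl in Hs |- *. fold (Lsum l). rewrite pow_add, Rmult_assoc.
 apply (Delta_pow_bound (INR m) n (DM l g) (X - Shift l)).
 apply pos_INR. intros; apply IH; auto. lra. Qed.

Lemma exp_pow_nat x m : exp x ^ m = exp (INR m * x).
Proof. induction m. simpl. rewrite Rmult_0_l, exp_0; auto. simpl pow.
 rewrite IHm, <- exp_plus, S_INR. f_equal; ring. Qed.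

Lemma DM_exp l u : let E := fun s => RtoC (exp (- u * s)) in
  DM l E = fun s => Cmul (LM l (RtoC (exp (- u)))) (E s).
Proof. intros E. induction l as [|[m n] l IH].
 apply functional_extensionality; intros; unfold LM; simpl; ring.
 rewrite DM_cons, IH, Delta_pow_scal. simpl. apply functional_extensionality; intros s.
 unfold LM; simpl. fold (LM l (RtoC (exp (-u)))).
 assert (Hp : forall k s, Delta_pow (INR m) k E s = Cmul (Cpow (Csub (Cpow (RtoC (exp (- u))) m) Cone) k) (E s)).
 { induction k; intros s'; simpl. ring. unfold Defs.Delta. rewrite !IHk.
   unfold E. rewrite Cpow_RtoC, exp_pow_nat.
   replace (- u * (s' + INR m)) with (- u * s' + INR m * - u) by ring. rewrite exp_plus, RtoC_mul. ring. }
 rewrite Hp. ring. Qed.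

Lemma Pderiv_aux_eval l j X : Peval_aux (Pderiv_aux l j) X =
  Cadd (Cmul (RtoC (INR j)) (Peval_aux l X)) (Cmul X (Peval_aux (Pderiv l) X)).
Proof. revert j; induction l as [|q l IH]; intros j.
 unfold Pderiv; simpl. cunf; apply Cext; simpl; ring.
 unfold Pderiv; simpl tl. simpl Pderiv_aux. simpl Peval_aux.
 rewrite IH. fold (Pderiv l). rewrite (IH 1%nat). rewrite S_INR, RtoC_add. simpl INR. ring. Qed.

Lemma Pderiv_cons_eval q l X : Peval_aux (Pderiv (q :: l)) X =
  Cadd (Peval_aux l X) (Cmul X (Peval_aux (Pderiv l) X)).
Proof. unfold Pderiv at 1; simpl tl. rewrite Pderiv_aux_eval. simpl INR. replace (RtoC 1) with Cone by reflexivity. ring. Qed.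

Section Proj.
Variable pi : Cplx -> R.
Hypothesis pi_add : forall a b, pi (Cadd a b) = pi a + pi b.
Hypothesis pi_mul : forall t w, pi (Cmul (RtoC t) w) = t * pi w.
Hypothesis pi_zero : pi Czero = 0.

Lemma Peval_is_derive p : forall x, is_derive (fun t => pi (Peval p t)) x (pi (Peval (Pderiv p) x)).
Proof. induction p as [|q l IH]; intros x.
 unfold Peval; simpl. rewrite pi_zero. apply (is_derive_const 0).
 unfold Peval in *. rewrite Pderiv_cons_eval. simpl Peval_aux.
 rewrite pi_add, pi_mul.
 assert (H1 := is_derive_mult (fun t => t) (fun t => pi (Peval_aux l (RtoC t))) x 1 _ (is_derive_id x) (IH x) Rmult_comm).
 assert (H2 := is_derive_plus _ _ x _ _ (is_derive_const (pi q) x) H1). simpl in H2.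
 replace (pi (Peval_aux l (RtoC x)) + x * pi (Peval_aux (Pderiv l) (RtoC x))) with
   (plus 0 (1 * pi (Peval_aux l (RtoC x)) + x * pi (Peval_aux (Pderiv l) (RtoC x)))).
 2:{ unfold plus; simpl; ring. }
 eapply is_derive_ext; [|exact H2]. intros t; simpl. rewrite pi_add, pi_mul. reflexivity. Qed.

Lemma Peval_Derive_n p m : forall x, Derive_n (fun t => pi (Peval p t)) m x = pi (Peval (Pderiv_n m p) x).
Proof. induction m; intros x; simpl; auto.
 rewrite (Derive_ext _ (fun t => pi (Peval (Pderiv_n m p) t))) by auto.
 apply is_derive_unique. apply Peval_is_derive. Qed.

Lemma Peval_ex_derive_n p k x : ex_derive_n (fun t => pi (Peval p t)) k x.
Proof. destruct k; simpl; auto.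
 apply (ex_derive_ext (fun t => pi (Peval (Pderiv_n k p) t))).
 intros; symmetry; apply Peval_Derive_n. eexists; apply Peval_is_derive. Qed.
End Proj.

Lemma Pderiv_length p : length (Pderiv p) = pred (length p).
Proof. unfold Pderiv. assert (forall l j, length (Pderiv_aux l j) = length l).
 induction l; simpl; auto. destruct p; simpl; auto. Qed.
Lemma Pderiv_n_length p m : length (Pderiv_n m p) = (length p - m)%nat.
Proof. induction m; simpl. lia. rewrite Pderiv_length, IHm. lia. Qed.
Lemma Pderiv_n_nil p : Pderiv_n (S (length p)) p = nil.
Proof. apply length_zero_iff_nil. rewrite Pderiv_n_length; lia. Qed.

Lemma Re_add a b : Re (Cadd a b) = Re a + Re b. Proof. reflexivity. Qed.
Lemma Im_add a b : Im (Cadd a b) = Im a + Im b. Proof. reflexivity. Qed.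
Lemma Re_mulR t w : Re (Cmul (RtoC t) w) = t * Re w. Proof. cunf; simpl; ring. Qed.
Lemma Im_mulR t w : Im (Cmul (RtoC t) w) = t * Im w. Proof. cunf; simpl; ring. Qed.

Section Proj2.
Variable pi : Cplx -> R.
Hypothesis pi_add : forall a b, pi (Cadd a b) = pi a + pi b.
Hypothesis pi_mul : forall t w, pi (Cmul (RtoC t) w) = t * pi w.
Hypothesis pi_zero : pi Czero = 0.
Lemma Taylor_pi p t s : 0 < s ->
  pi (Peval p (t + s)) = sum_f_R0 (fun m => s ^ m / INR (Factorial.fact m) * pi (Peval (Pderiv_n m p) t)) (length p).
Proof. intros Hs.
 destruct (Taylor_Lagrange (fun x => pi (Peval p x)) (length p) t (t + s)) as [z [_ Hz]]. lra.
 intros; apply Peval_ex_derive_n; auto.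
 rewrite Hz. rewrite (Peval_Derive_n pi pi_add pi_mul pi_zero p (S (length p))), Pderiv_n_nil.
 change (Peval nil z) with Czero. rewrite pi_zero, Rmult_0_r, Rplus_0_r.
 apply sum_eq; intros. rewrite (Peval_Derive_n pi pi_add pi_mul pi_zero). f_equal. f_equal. f_equal. ring. Qed.
End Proj2.

Lemma Taylor_C p t s : 0 <= s ->
  Peval p (t + s) = Cpsum (fun m => Cmul (RtoC (s ^ m / INR (Factorial.fact m))) (Peval (Pderiv_n m p) t)) (S (length p)).
Proof. intros Hs. destruct (Rle_lt_or_eq_dec 0 s Hs) as [Hs'|<-].
 - apply Cext. rewrite Re_Cpsum, (Taylor_pi Re Re_add Re_mulR eq_refl p t s Hs').
   apply sum_eq; intros; rewrite Re_mulR; auto.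
   rewrite Im_Cpsum, (Taylor_pi Im Im_add Im_mulR eq_refl p t s Hs').
   apply sum_eq; intros; rewrite Im_mulR; auto.
 - rewrite Cpsum_shift. rewrite (Cpsum_ext _ (fun _ => Czero)), Cpsum_zero.
   simpl. rewrite Rplus_0_r. unfold Rdiv; rewrite Rinv_1, Rmult_1_l.
   change (RtoC 1) with Cone. ring.
   intros k _. simpl. rewrite Rmult_0_l. unfold Rdiv; rewrite Rmult_0_l. apply Cext; cunf; simpl; ring.
Qed.

Lemma pow_le1 x n : 0 <= x <= 1 -> x ^ n <= 1.
Proof. intros H. rewrite <- (pow1 n). apply pow_incr; lra. Qed.
Lemma pow_decr x m n : 0 <= x <= 1 -> (m <= n)%nat -> x ^ n <= x ^ m.
Proof. intros H Hmn. replace n with (m + (n - m))%nat by lia. rewrite pow_add.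
 rewrite <- (Rmult_1_r (x ^ m)) at 2. apply Rmult_le_compat_l. apply pow_le; lra. apply pow_le1; lra. Qed.

Definition BigoC (n : nat) (G : R -> Cplx) : Prop :=
  exists C u1, 0 < u1 /\ forall u, 0 < u <= u1 -> Cnorm (G u) <= C * u ^ n.

Lemma BigoC_nonnegC n G : BigoC n G -> exists C u1, 0 <= C /\ 0 < u1 /\ forall u, 0 < u <= u1 -> Cnorm (G u) <= C * u ^ n.
Proof. intros [C [u1 [H1 H]]]. exists (Rmax C 0), u1; split; [apply Rmax_r|split; auto].
 intros u Hu. eapply Rle_trans. apply H; auto. apply Rmult_le_compat_r. apply pow_le; lra. apply Rmax_l. Qed.

Lemma BigoC_add n F G : BigoC n F -> BigoC n G -> BigoC n (fun u => Cadd (F u) (G u)).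
Proof. intros HF HG. apply BigoC_nonnegC in HF as [C1 [u1 [? [? H1]]]]. apply BigoC_nonnegC in HG as [C2 [u2 [? [? H2]]]].
 exists (C1 + C2), (Rmin u1 u2). split. apply Rmin_glb_lt; auto. intros u Hu.
 assert (u <= u1) by (eapply Rle_trans; [apply Hu|apply Rmin_l]).
 assert (u <= u2) by (eapply Rle_trans; [apply Hu|apply Rmin_r]).
 eapply Rle_trans. apply Cnorm_triang. specialize (H1 u ltac:(lra)). specialize (H2 u ltac:(lra)). lra. Qed.
Lemma BigoC_scal n a G : BigoC n G -> BigoC n (fun u => Cmul a (G u)).
Proof. intros [C [u1 [? H]]]. exists (Cnorm a * C), u1; split; auto. intros u Hu.
 rewrite Cnorm_mul, Rmult_assoc. apply Rmult_le_compat_l. apply Cnorm_ge0. auto. Qed.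
Lemma BigoC_ext n F G : (forall u, 0 < u -> F u = G u) -> BigoC n G -> BigoC n F.
Proof. intros E [C [u1 [? H]]]. exists C, u1; split; auto. intros u Hu; rewrite E by lra; auto. Qed.
Lemma BigoC_sub n F G : BigoC n F -> BigoC n G -> BigoC n (fun u => Csub (F u) (G u)).
Proof. intros HF HG. apply (BigoC_ext _ _ (fun u => Cadd (F u) (Cmul (Copp Cone) (G u)))).
 intros; unfold Csub; ring. apply BigoC_add; auto. apply BigoC_scal; auto. Qed.
Lemma BigoC_zero n : BigoC n (fun _ => Czero).
Proof. exists 0, 1; split. lra. intros; rewrite Cnorm_zero; lra. Qed.
Lemma BigoC_CsumL {A} n (l : list A) G : (forall x, In x l -> BigoC n (G x)) ->
  BigoC n (fun u => CsumL l (fun x => G x u)).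
Proof. induction l as [|a l IHl]; intros Hl. apply BigoC_zero.
 apply (BigoC_ext _ _ (fun u => Cadd (G a u) (CsumL l (fun x => G x u)))). intros; reflexivity.
 apply BigoC_add. apply Hl; simpl; auto. apply IHl; intros; apply Hl; simpl; auto. Qed.
Lemma BigoC_le n F G : (exists u0, 0 < u0 /\ forall u, 0 < u <= u0 -> Cnorm (F u) <= Cnorm (G u)) -> BigoC n G -> BigoC n F.
Proof. intros [u0 [Hu0 Hle]] [C [u1 [Hu1 H]]]. exists C, (Rmin u0 u1). split. apply Rmin_glb_lt; auto.
 intros u Hu. assert (u <= u0) by (eapply Rle_trans; [apply Hu|apply Rmin_l]).
 assert (u <= u1) by (eapply Rle_trans; [apply Hu|apply Rmin_r]).
 eapply Rle_trans. apply Hle; lra. apply H; lra. Qed.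

Lemma poly_zero n : forall a, BigoC n (fun u => Cpsum (fun k => Cmul (a k) (RtoC (u ^ k))) n) ->
  forall k, (k < n)%nat -> a k = Czero.
Proof. induction n; intros a Ha k Hk. lia.
 apply BigoC_nonnegC in Ha as [C [u1 [HC [Hu1 H]]]].
 set (R0 := Rpsum (fun k => Cnorm (a (S k))) n).
 assert (HR0 : 0 <= R0) by (apply Rpsum_ge0; intros; apply Cnorm_ge0).
 assert (Hrest : forall u, 0 < u <= 1 -> Cnorm (Cpsum (fun k => Cmul (a (S k)) (RtoC (u ^ k))) n) <= R0).
 { intros u Hu. eapply Rle_trans. apply Cpsum_norm. apply Rpsum_le. intros j _.
   rewrite Cnorm_mul, Cnorm_RtoC. rewrite <- (Rmult_1_r (Cnorm (a (S j)))) at 2.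
   apply Rmult_le_compat_l. apply Cnorm_ge0. rewrite Rabs_pos_eq by (apply pow_le; lra).
   apply pow_le1; lra. }
 assert (Hsplit : forall u, Cpsum (fun k => Cmul (a k) (RtoC (u ^ k))) (S n) =
   Cadd (a O) (Cmul (RtoC u) (Cpsum (fun k => Cmul (a (S k)) (RtoC (u ^ k))) n))).
 { intros u. rewrite Cpsum_shift. rewrite <- Cpsum_scal. f_equal. simpl. change (RtoC 1) with Cone; ring.
   apply Cpsum_ext; intros; simpl. rewrite RtoC_mul; ring. }
 assert (Ha0 : a O = Czero).
 { destruct (Req_dec (Cnorm (a O)) 0) as [E|E]. apply Cnorm_eq0; auto.
   exfalso. assert (Hp : 0 < Cnorm (a O)) by (pose proof (Cnorm_ge0 (a O)); lra).
   set (u := Rmin (Rmin u1 1) (Cnorm (a O) / (2 * (C + R0 + 1)))).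
   assert (Hu0 : 0 < u). { unfold u. apply Rmin_glb_lt. apply Rmin_glb_lt; lra. apply Rdiv_lt_0_compat; lra. }
   assert (Hu1' : u <= u1) by (unfold u; eapply Rle_trans; [apply Rmin_l|apply Rmin_l]).
   assert (Hu2 : u <= 1) by (unfold u; eapply Rle_trans; [apply Rmin_l|apply Rmin_r]).
   assert (Hu3 : u <= Cnorm (a O) / (2 * (C + R0 + 1))) by (unfold u; apply Rmin_r).
   specialize (H u ltac:(lra)). rewrite Hsplit in H. specialize (Hrest u ltac:(lra)).
   assert (Hpow : u ^ S n <= u) by (simpl; apply Rle_trans with (u * 1); [apply Rmult_le_compat_l; [lra|apply pow_le1; lra]|lra]).
   assert (Cnorm (a O) <= C * u + u * R0).
   { replace (a O) with (Csub (Cadd (a O) (Cmul (RtoC u) (Cpsum (fun k => Cmul (a (S k)) (RtoC (u ^ k))) n)))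
        (Cmul (RtoC u) (Cpsum (fun k => Cmul (a (S k)) (RtoC (u ^ k))) n))) by ring.
     eapply Rle_trans. apply Cnorm_triang_sub. rewrite Cnorm_mul, Cnorm_RtoC, Rabs_pos_eq by lra.
     assert (C * u ^ S n <= C * u) by (apply Rmult_le_compat_l; auto). nra. }
   assert (u * (2 * (C + R0 + 1)) <= Cnorm (a O)).
   { apply (Rmult_le_compat_r (2 * (C + R0 + 1))) in Hu3; [|lra]. unfold Rdiv in Hu3.
     rewrite Rmult_assoc, Rinv_l, Rmult_1_r in Hu3 by lra. lra. }
   nra. }
 destruct k. auto.
 apply (IHn (fun k => a (S k))); [|lia].
 exists C, (Rmin u1 1); split. apply Rmin_glb_lt; lra. intros u Hu.
 assert (u <= u1) by (eapply Rle_trans; [apply Hu|apply Rmin_l]).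
 specialize (H u ltac:(lra)). rewrite Hsplit, Ha0 in H.
 replace (Cadd Czero _) with (Cmul (RtoC u) (Cpsum (fun k => Cmul (a (S k)) (RtoC (u ^ k))) n)) in H by ring.
 rewrite Cnorm_mul, Cnorm_RtoC, Rabs_pos_eq in H by lra. simpl in H.
 apply (Rmult_le_reg_l u); [lra|]. nra. Qed.

Lemma Rpsum_sum_f f n : Rpsum f (S n) = sum_f_R0 f n.
Proof. induction n; simpl. ring. simpl in IHn. rewrite <- IHn. reflexivity. Qed.

Lemma Derive_n_expneg m y : Derive_n (fun x => exp (- x)) m y = (-1) ^ m * exp (- y).
Proof. revert y; induction m; intros y; simpl. ring.
 rewrite (Derive_ext _ (fun x => (-1) ^ m * exp (- x))) by auto.
 apply is_derive_unique. auto_derive; auto. ring. Qed.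

Lemma exp_rem x n : 0 <= x ->
  Rabs (exp (- x) - Rpsum (fun k => (- x) ^ k / INR (Factorial.fact k)) n) <= x ^ n.
Proof. intros Hx. assert (He : exp (- x) <= 1).
 { destruct (Rle_lt_or_eq_dec 0 x Hx) as [Hx'|<-]. rewrite <- exp_0. left. apply exp_increasing; lra.
   rewrite Ropp_0, exp_0; lra. }
 pose proof (exp_pos (- x)).
 destruct n as [|n].
 { simpl. rewrite Rminus_0_r, Rabs_pos_eq; lra. }
 destruct (Rle_lt_or_eq_dec 0 x Hx) as [Hx'|<-].
 - destruct (Taylor_Lagrange (fun y => exp (- y)) n 0 x Hx') as [z [Hz E]].
   { intros t _ k _. destruct k; simpl; auto.
     apply (ex_derive_ext (fun y => (-1) ^ k * exp (- y))). intros; symmetry; apply Derive_n_expneg.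
     auto_derive; auto. }
   cbv beta in E. rewrite E. rewrite Rpsum_sum_f.
   replace (sum_f_R0 (fun m => (x - 0) ^ m / INR (Factorial.fact m) * Derive_n (fun y => exp (- y)) m 0) n)
     with (sum_f_R0 (fun k => (- x) ^ k / INR (Factorial.fact k)) n).
   2:{ apply sum_eq; intros. rewrite Derive_n_expneg, Ropp_0, exp_0. rewrite Rminus_0_r.
       replace (- x) with ((-1) * x) by ring. rewrite Rpow_mult_distr. field. apply INR_fact_neq_0. }
   rewrite Derive_n_expneg.
   match goal with |- Rabs (?a + ?b - ?a) <= _ => replace (a + b - a) with b by ring end.
   rewrite Rminus_0_r. rewrite !Rabs_mult. rewrite pow_1_abs, Rmult_1_l.
   rewrite (Rabs_pos_eq (exp _)) by (left; apply exp_pos).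
   unfold Rdiv. rewrite Rabs_mult. rewrite Rabs_pos_eq by (apply pow_le; lra).
   rewrite Rabs_pos_eq by (left; apply Rinv_0_lt_compat, INR_fact_lt_0).
   assert (exp (- z) <= 1) by (rewrite <- exp_0; left; apply exp_increasing; lra).
   assert (/ INR (Factorial.fact (S n)) <= 1).
   { rewrite <- Rinv_1. apply Rinv_le_contravar. lra. apply (le_INR 1). apply Factorial.lt_O_fact. }
   assert (0 <= x ^ S n) by (apply pow_le; lra).
   assert (0 < / INR (Factorial.fact (S n))) by (apply Rinv_0_lt_compat, INR_fact_lt_0).
   assert (0 < exp (- z)) by apply exp_pos.
   apply Rle_trans with (x ^ S n * 1 * 1). 2: lra.
   apply Rmult_le_compat; try nra; try (apply Rmult_le_compat; lra).
 - rewrite Rpsum_shift. rewrite (Rpsum_ext _ (fun _ => 0)).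
   2:{ intros; simpl. rewrite Ropp_0, Rmult_0_l. unfold Rdiv; ring. }
   assert (forall m, Rpsum (fun _ => 0) m = 0) as Z by (induction m; simpl; auto; rewrite IHm; ring).
   rewrite Z. simpl. rewrite Ropp_0, exp_0. unfold Rdiv. rewrite Rinv_1. rewrite Rmult_0_l.
   replace (1 - (1 * 1 + 0)) with 0 by ring. rewrite Rabs_R0. lra.
Qed.

Lemma LM_bound_u l u E : 0 < u -> Forall (fun p => (1 <= fst p)%nat /\ INR (fst p) <= E) l ->
  Cnorm (LM l (RtoC (exp (- u)))) <= (u * E) ^ (Lsum l).
Proof. intros Hu; induction l as [|[m n] l IH]; intros HF.
 unfold LM; simpl. unfold Cone; rewrite Cnorm_RtoC, Rabs_R1; lra.
 inversion HF as [|? ? [Hm HE] HF']; subst. simpl in *.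
 unfold LM; simpl. fold (LM l (RtoC (exp (-u)))). rewrite Cnorm_mul, Cnorm_pow, pow_add.
 apply Rmult_le_compat. apply pow_le, Cnorm_ge0. apply Cnorm_ge0. 2: apply IH; auto.
 apply pow_incr. split. apply Cnorm_ge0.
 rewrite Cpow_RtoC. unfold Cone. rewrite <- RtoC_sub, Cnorm_RtoC, exp_pow_nat.
 assert (1 <= INR m) by (apply (le_INR 1); auto).
 assert (1 + (INR m * - u) < exp (INR m * - u)) by (apply exp_ineq1; nra).
 assert (exp (INR m * - u) < 1) by (rewrite <- exp_0; apply exp_increasing; nra).
 rewrite Rabs_left by lra. nra. Qed.

Lemma LM_bound_half l : Forall (fun p => (1 <= fst p)%nat) l ->
  (1/2) ^ (Lsum l) <= Cnorm (LM l (RtoC (1/2))).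
Proof. induction l as [|[m n] l IH]; intros HF.
 unfold LM; simpl. unfold Cone; rewrite Cnorm_RtoC, Rabs_R1; lra.
 inversion HF as [|? ? Hm HF']; subst. simpl in *.
 unfold LM; simpl. fold (LM l (RtoC (1/2))). rewrite Cnorm_mul, Cnorm_pow, pow_add.
 apply Rmult_le_compat. apply pow_le; lra. apply pow_le; lra. 2: apply IH; auto.
 apply pow_incr. split. lra.
 rewrite Cpow_RtoC. unfold Cone. rewrite <- RtoC_sub, Cnorm_RtoC.
 assert ((1/2) ^ m <= 1/2) by (rewrite <- (pow_1 (1/2)) at 2; apply (pow_decr (1/2) 1 m); [lra|auto]).
 assert (0 < (1/2) ^ m) by (apply pow_lt; lra).
 rewrite Rabs_left by lra. lra. Qed.

Lemma lim_bound v l X B : Cseq_lim v l -> (exists M1, forall M, (M1 <= M)%nat -> Cnorm (Csub (v M) X) <= B) ->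
  Cnorm (Csub l X) <= B.
Proof. intros Hl [M1 HM]. destruct (Rle_lt_dec (Cnorm (Csub l X)) B) as [?|Hlt]; auto. exfalso.
 destruct (Hl (Cnorm (Csub l X) - B)) as [M2 HM2]. lra.
 specialize (HM (max M1 M2) ltac:(lia)). specialize (HM2 (max M1 M2) ltac:(lia)).
 pose proof (Cnorm_le_triang3 l (v (max M1 M2)) X) as H3. rewrite (Cnorm_sub_sym l (v _)) in H3. lra. Qed.

Lemma Cpsum_terms_bounded g l : Cseq_lim (Cpsum g) l -> exists Bb, 0 <= Bb /\ forall k, Cnorm (g k) <= Bb.
Proof. intros Hl. destruct (Hl 1) as [M HM]. lra.
 exists (2 + Rpsum (fun k => Cnorm (g k)) M). split.
 assert (0 <= Rpsum (fun k => Cnorm (g k)) M) by (apply Rpsum_ge0; intros; apply Cnorm_ge0). lra.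
 intros k. destruct (Compare_dec.le_lt_dec M k).
 - assert (0 <= Rpsum (fun k => Cnorm (g k)) M) by (apply Rpsum_ge0; intros; apply Cnorm_ge0).
   replace (g k) with (Csub (Csub (Cpsum g (S k)) l) (Csub (Cpsum g k) l)) by (simpl; ring).
   eapply Rle_trans. apply Cnorm_triang_sub. pose proof (HM (S k) ltac:(lia)). pose proof (HM k l0). lra.
 - assert (Cnorm (g k) <= Rpsum (fun k => Cnorm (g k)) M).
   { clear -l0. induction M. lia. simpl. destruct (Nat.eq_dec k M) as [->|].
     assert (0 <= Rpsum (fun k => Cnorm (g k)) M) by (apply Rpsum_ge0; intros; apply Cnorm_ge0). lra.
     pose proof (Cnorm_ge0 (g M)). assert (Cnorm (g k) <= Rpsum (fun k => Cnorm (g k)) M) by (apply IHM; lia). lra. }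
   lra. Qed.

Lemma geom_tail f Bb r n : 0 <= Bb -> 0 <= r <= 1/2 -> (forall k, Cnorm (f k) <= Bb * r ^ k) ->
  forall M, (n <= M)%nat -> Cnorm (Csub (Cpsum f M) (Cpsum f n)) <= 2 * Bb * r ^ n - 2 * Bb * r ^ M.
Proof. intros HB Hr Hf M HM. induction HM as [|M HM IH].
 replace (Csub (Cpsum f n) (Cpsum f n)) with Czero by ring. rewrite Cnorm_zero; lra.
 replace (Csub (Cpsum f (S M)) (Cpsum f n)) with (Cadd (Csub (Cpsum f M) (Cpsum f n)) (f M)) by (simpl; ring).
 eapply Rle_trans. apply Cnorm_triang. specialize (Hf M).
 assert (0 <= Bb * r ^ M) by (apply Rmult_le_pos; auto; apply pow_le; lra).
 simpl. nra. Qed.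

Lemma series_tail (b : nat -> Cplx) rho Phi n : 0 < rho ->
  (forall u, 0 < Cnorm u < rho -> Cseries_sum (fun k => Cmul (b k) (Cpow u k)) (Phi u)) ->
  BigoC n (fun u => Csub (Phi (RtoC u)) (Cpsum (fun k => Cmul (b k) (Cpow (RtoC u) k)) n)).
Proof. intros Hrho Hs. set (u0 := rho / 2).
 assert (Hu0 : 0 < u0) by (unfold u0; lra).
 destruct (Cpsum_terms_bounded (fun k => Cmul (b k) (Cpow (RtoC u0) k)) (Phi (RtoC u0))) as [Bb [HBb HB]].
 { apply Hs. rewrite Cnorm_RtoC, Rabs_pos_eq; unfold u0; lra. }
 exists (2 * Bb / u0 ^ n), (u0 / 2). split. lra. intros u Hu.
 set (r := u / u0).
 assert (Hr : 0 <= r <= 1/2). { unfold r; split. apply Rdiv_le_0_compat; lra.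
   apply (Rmult_le_reg_r u0); auto. unfold Rdiv; rewrite Rmult_assoc, Rinv_l, Rmult_1_r; lra. }
 assert (Hf : forall k, Cnorm (Cmul (b k) (Cpow (RtoC u) k)) <= Bb * r ^ k).
 { intros k. specialize (HB k). rewrite Cnorm_mul, Cpow_RtoC, Cnorm_RtoC in *.
   rewrite Rabs_pos_eq in * by (apply pow_le; lra).
   replace u with (u0 * r) by (unfold r; field; lra). rewrite Rpow_mult_distr.
   assert (0 <= r ^ k) by (apply pow_le; lra).
   replace (Cnorm (b k) * (u0 ^ k * r ^ k)) with ((Cnorm (b k) * u0 ^ k) * r ^ k) by ring.
   apply Rmult_le_compat_r; auto. }
 assert (Hlim : Cnorm (Csub (Phi (RtoC u)) (Cpsum (fun k => Cmul (b k) (Cpow (RtoC u) k)) n)) <= 2 * Bb * r ^ n).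
 { apply (lim_bound (Cpsum (fun k => Cmul (b k) (Cpow (RtoC u) k)))).
   apply Hs. rewrite Cnorm_RtoC, Rabs_pos_eq; unfold u0 in *; lra.
   exists n. intros M HM. eapply Rle_trans. apply (geom_tail _ Bb r n); auto.
   assert (0 <= 2 * Bb * r ^ M) by (apply Rmult_le_pos; [lra|apply pow_le; lra]). lra. }
 eapply Rle_trans. apply Hlim. unfold r. unfold Rdiv. rewrite Rpow_mult_distr, pow_inv. right; field.
 apply pow_nonzero; lra. Qed.

Definition mu (l : list (nat * nat)) (k : nat) : Cplx := DM l (fun s => RtoC (s ^ k)) 0.
Definition qc (k : nat) : R := (-1) ^ k / INR (Factorial.fact k).
Definition q (l : list (nat * nat)) (k : nat) : Cplx := Cmul (RtoC (qc k)) (mu l k).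

Lemma qc_nz k : qc k <> 0.
Proof. unfold qc. apply Rmult_integral_contrapositive; split. apply pow_nonzero; lra.
 apply Rinv_neq_0_compat, INR_fact_neq_0. Qed.
Lemma mu_from_q l k : mu l k = Cmul (RtoC (/ qc k)) (q l k).
Proof. unfold q. replace (Cmul (RtoC (/ qc k)) (Cmul (RtoC (qc k)) (mu l k))) with
  (Cmul (RtoC (/ qc k * qc k)) (mu l k)) by (rewrite RtoC_mul; ring).
 rewrite Rinv_l by apply qc_nz. change (RtoC 1) with Cone. ring. Qed.

Lemma DM_agree l g1 g2 : (forall s, 0 <= s -> g1 s = g2 s) -> DM l g1 0 = DM l g2 0.
Proof. intros H. assert (Hb := DM_bound l (fun s => Csub (g1 s) (g2 s)) (Shift l) 0).
 rewrite DM_sub in Hb. cbv beta in Hb.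
 assert (Cnorm (Csub (DM l g1 0) (DM l g2 0)) <= 0).
 { rewrite <- (Rmult_0_r (2 ^ Lsum l)). apply Hb. intros s Hs. rewrite H by lra.
   replace (Csub (g2 s) (g2 s)) with Czero by ring. rewrite Cnorm_zero; lra. lra. }
 assert (E : Csub (DM l g1 0) (DM l g2 0) = Czero) by (apply Cnorm_eq0; pose proof (Cnorm_ge0 (Csub (DM l g1 0) (DM l g2 0))); lra).
 replace (DM l g1 0) with (Cadd (Csub (DM l g1 0) (DM l g2 0)) (DM l g2 0)) by ring. rewrite E; ring. Qed.

Lemma DP_taylor l p t : DM l (Peval p) t =
  Cpsum (fun m => Cmul (Cmul (RtoC (/ INR (Factorial.fact m))) (Peval (Pderiv_n m p) t)) (mu l m)) (S (length p)).
Proof. replace t with (t + 0) at 1 by ring.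
 change (DM l (Peval p) (t + 0)) with ((fun s => DM l (Peval p) (t + s)) 0).
 rewrite <- (DM_shift l t (Peval p)).
 rewrite (DM_agree l _ (fun s => Cpsum (fun m => Cmul (Cmul (RtoC (/ INR (Factorial.fact m))) (Peval (Pderiv_n m p) t)) (RtoC (s ^ m))) (S (length p)))).
 rewrite DM_Cpsum. reflexivity.
 intros s Hs. rewrite Taylor_C by auto. apply Cpsum_ext. intros m _.
 unfold Rdiv. rewrite RtoC_mul. ring. Qed.

Lemma exp_approx l n : BigoC n (fun u => Csub (LM l (RtoC (exp (- u)))) (Cpsum (fun k => Cmul (q l k) (RtoC (u ^ k))) n)).
Proof. exists (2 ^ Lsum l * Shift l ^ n), 1. split. lra. intros u Hu.
 set (E := fun s => RtoC (exp (- u * s))).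
 set (T := fun s => Cpsum (fun k => Cmul (RtoC ((- u) ^ k / INR (Factorial.fact k))) (RtoC (s ^ k))) n).
 assert (H1 : LM l (RtoC (exp (- u))) = DM l E 0).
 { assert (HD := DM_exp l u). cbv zeta in HD. change (fun s => RtoC (exp (- u * s))) with E in HD.
   rewrite HD. unfold E. rewrite Rmult_0_r, exp_0. change (RtoC 1) with Cone. ring. }
 assert (H2 : Cpsum (fun k => Cmul (q l k) (RtoC (u ^ k))) n = DM l T 0).
 { unfold T. rewrite DM_Cpsum. apply Cpsum_ext; intros k _. unfold q, qc, mu.
   replace ((- u) ^ k / INR (Factorial.fact k)) with ((-1) ^ k / INR (Factorial.fact k) * u ^ k).
   rewrite RtoC_mul; ring. replace (- u) with (-1 * u) by ring. rewrite Rpow_mult_distr. field. apply INR_fact_neq_0. }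
 rewrite H1, H2. change (Csub (DM l E 0) (DM l T 0)) with ((fun s => Csub (DM l E s) (DM l T s)) 0).
 rewrite <- (DM_sub l E T).
 rewrite Rmult_assoc, <- Rpow_mult_distr.
 apply (DM_bound l _ (Shift l)). 2: { split. lra. lra. }
 intros s Hs. unfold E, T. rewrite (Cpsum_ext _ (fun k => RtoC ((- (u * s)) ^ k / INR (Factorial.fact k)))).
 rewrite Rpsum_RtoC, <- RtoC_sub, Cnorm_RtoC. replace (- u * s) with (- (u * s)) by ring.
 eapply Rle_trans. apply exp_rem. nra. apply pow_incr. split; nra.
 intros k _. rewrite <- RtoC_mul. f_equal. replace (- (u * s)) with (- u * s) by ring. rewrite Rpow_mult_distr. field. apply INR_fact_neq_0.
Qed.

Lemma q_vanish l E k : Forall (fun p => (1 <= fst p)%nat /\ INR (fst p) <= E) l ->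
  (k < Lsum l)%nat -> q l k = Czero.
Proof. intros HF Hk.
 apply (poly_zero (S k) (q l)); [|lia].
 assert (HL : BigoC (S k) (fun u => LM l (RtoC (exp (- u))))).
 { assert (HE : 0 <= E). { destruct l as [|p l]. simpl in Hk; lia. inversion HF; subst.
     destruct H1. pose proof (pos_INR (fst p)). lra. }
   exists (E ^ Lsum l), 1. split. lra. intros u Hu. eapply Rle_trans. apply (LM_bound_u l u E); auto. lra.
   rewrite Rpow_mult_distr, Rmult_comm. apply Rmult_le_compat_l. apply pow_le; auto.
   apply pow_decr; [lra|lia]. }
 apply (BigoC_ext _ _ (fun u => Csub (LM l (RtoC (exp (- u)))) (Csub (LM l (RtoC (exp (- u)))) (Cpsum (fun j => Cmul (q l j) (RtoC (u ^ j))) (S k))))).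
 intros; ring. apply BigoC_sub; auto. apply exp_approx. Qed.

Lemma in_le_list_sum k i : In k i -> (k <= list_sum i)%nat.
Proof. induction i; simpl; intros H. destruct H. destruct H as [->|H]. lia. specialize (IHi H); lia. Qed.
Lemma Lsum_combine e i : (length i <= length e)%nat -> Lsum (combine e i) = list_sum i.
Proof. revert e; induction i; intros e H; destruct e; simpl in *; auto. lia.
 rewrite <- (IHi e) by lia. reflexivity. Qed.
Lemma Forall_combine (P : nat -> Prop) e (i : list nat) : Forall P e -> Forall (fun p : nat * nat => P (fst p)) (combine e i).
Proof. revert i; induction e; intros i H; destruct i; simpl; auto.
 inversion H; subst. constructor; auto. Qed.
Lemma in_le_list_sum_R a e : In a e -> INR a <= INR (list_sum e).
Proof. intros H; apply le_INR, in_le_list_sum; auto. Qed.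
Lemma RtoC_RsumL {A} (l : list A) f : RtoC (RsumL l f) = CsumL l (fun x => RtoC (f x)).
Proof. induction l. reflexivity. rewrite CsumL_cons, <- IHl. simpl. rewrite RtoC_add. reflexivity. Qed.
Lemma RsumL_scal_r {A} (l : list A) a f : RsumL l (fun x => f x * a) = RsumL l f * a.
Proof. induction l; simpl. ring. rewrite IHl; ring. Qed.
Lemma Cln_pos y : 0 < y -> Cln (RtoC y) = RtoC (ln y).
Proof. intros Hy. unfold Cln. rewrite Cnorm_RtoC, Rabs_pos_eq by lra. unfold RtoC at 2. f_equal.
 unfold Carg; simpl. destruct (Rlt_dec 0 y); [|lra]. unfold Rdiv; rewrite Rmult_0_l. apply atan_0. Qed.
Lemma Cexp_negR u : Cexp (Copp (RtoC u)) = RtoC (exp (- u)).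
Proof. unfold Cexp, Copp, RtoC; simpl. rewrite Ropp_0, cos_0, sin_0, Rmult_1_r, Rmult_0_r. reflexivity. Qed.

Section Key.
Variables (N : nat) (e : list nat) (c : list nat -> Cplx) (W : Cplx -> Prop) (K F : Cplx -> Cplx) (nu : nat) (b : nat -> Cplx) (D : nat).
Hypothesis Hev : exponent_vector N e.
Hypothesis HW : nbhd_0_1 W.
Hypothesis HM : multi_conv_abs_unif N (fun i z => Cmul (c i) (lam_mono e i z)) W K.
Hypothesis HKu : forall u, 0 < u -> K (RtoC (exp (- u))) = Cmul (Cpow (RtoC u) nu) (F (Cexp (Copp (RtoC u)))).
Hypothesis Hb : taylor_coeffs_at0 F nu b.

Definition Emax := INR (list_sum e).
Definition Sk k := CsumL (boxidx N D) (fun i => Cmul (c i) (q (combine e i) k)).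

Lemma HFl (i : list nat) : Forall (fun p : nat * nat => (1 <= fst p)%nat /\ INR (fst p) <= Emax) (combine e i).
Proof. destruct Hev as [_ [_ Hpos]].
 assert (Forall (fun k => (1 <= k)%nat /\ INR k <= Emax) e).
 { apply Forall_forall. intros x Hx. rewrite Forall_forall in Hpos. split. apply Hpos; auto.
   apply in_le_list_sum_R; auto. }
 apply (Forall_combine (fun k => (1 <= k)%nat /\ INR k <= Emax)); auto. Qed.

Lemma Hvan i k : length i = N -> (k < list_sum i)%nat -> q (combine e i) k = Czero.
Proof. intros Hl Hk. apply (q_vanish _ Emax). apply HFl. rewrite Lsum_combine; auto.
 destruct Hev as [_ [He _]]; lia. Qed.

Lemma Emax_ge0 : 0 <= Emax.
Proof. apply pos_INR. Qed.

Lemma exch u : Cpsum (fun k => Cmul (Sk k) (RtoC (u ^ k))) D =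
  CsumL (boxidx N D) (fun i => Cmul (c i) (Cpsum (fun k => Cmul (q (combine e i) k) (RtoC (u ^ k))) D)).
Proof. rewrite (CsumL_ext _ _ (fun i => Cpsum (fun k => Cmul (c i) (Cmul (q (combine e i) k) (RtoC (u ^ k)))) D)).
 2: intros; rewrite Cpsum_scal; auto.
 rewrite CsumL_Cpsum. apply Cpsum_ext; intros k _. unfold Sk.
 rewrite (CsumL_ext (boxidx N D) (fun i => Cmul (c i) (Cmul (q (combine e i) k) (RtoC (u ^ k)))) (fun i => Cmul (RtoC (u ^ k)) (Cmul (c i) (q (combine e i) k)))).
 rewrite CsumL_scal; ring. intros; ring. Qed.

Lemma partA : BigoC D (fun u => Csub (K (RtoC (exp (- u)))) (Cpsum (fun k => Cmul (Sk k) (RtoC (u ^ k))) D)).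
Proof.
 set (zh := RtoC (1/2)). assert (Wzh : W zh) by (apply HW; lra).
 destruct HM as [Htail Hlim].
 destruct (Htail 1) as [M0 HM0]. lra.
 set (A := RsumL (boxidx N M0) (fun i => Cnorm (Cmul (c i) (lam_mono e i zh))) + 1).
 assert (HA : forall M, (M0 <= M)%nat -> RsumL (boxidx N M) (fun i => Cnorm (Cmul (c i) (lam_mono e i zh))) <= A).
 { intros M HMM. specialize (HM0 M zh HMM Wzh). unfold A. lra. }
 set (G := fun i u => Cmul (c i) (Csub (LM (combine e i) (RtoC (exp (- u)))) (Cpsum (fun k => Cmul (q (combine e i) k) (RtoC (u ^ k))) D))).
 assert (HG : BigoC D (fun u => RtoC (RsumL (boxidx N D) (fun i => Cnorm (G i u))))).
 { apply (BigoC_ext _ _ (fun u => CsumL (boxidx N D) (fun i => RtoC (Cnorm (G i u))))).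
   intros; apply RtoC_RsumL. apply BigoC_CsumL. intros i _.
   apply (BigoC_le _ _ (G i)). exists 1; split; [lra|]. intros; rewrite Cnorm_RtoC, Rabs_pos_eq; [lra|apply Cnorm_ge0].
   unfold G. apply BigoC_scal. apply exp_approx. }
 destruct HG as [Cg [ug [Hug HGb]]].
 pose proof Emax_ge0 as HE.
 exists (A * (2 * Emax) ^ D + Cg), (Rmin ug (1 / (2 * Emax + 1))). split.
 { apply Rmin_glb_lt; auto. apply Rdiv_lt_0_compat; lra. }
 intros u Hu.
 assert (Hu1 : u <= ug) by (eapply Rle_trans; [apply Hu|apply Rmin_l]).
 assert (Hu2 : u <= 1 / (2 * Emax + 1)) by (eapply Rle_trans; [apply Hu|apply Rmin_r]).
 assert (H2uE : 0 <= 2 * u * Emax <= 1).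
 { split. assert (0 <= u * Emax) by (apply Rmult_le_pos; lra). lra.
   apply (Rmult_le_compat_r (2 * Emax + 1)) in Hu2; [|lra]. unfold Rdiv in Hu2.
   rewrite Rmult_assoc, Rinv_l, Rmult_1_r in Hu2 by lra. nra. }
 set (z := RtoC (exp (- u))).
 assert (Wz : W z). { apply HW. split. apply exp_pos. rewrite <- exp_0. left; apply exp_increasing; lra. }
 apply (lim_bound (fun M => CsumL (boxidx N M) (fun i => Cmul (c i) (lam_mono e i z)))). apply Hlim; auto.
 exists (max M0 D). intros M HMge.
 assert (Heq : Csub (CsumL (boxidx N M) (fun i => Cmul (c i) (lam_mono e i z))) (Cpsum (fun k => Cmul (Sk k) (RtoC (u ^ k))) D)
    = CsumL (boxidx N M) (fun i => G i u)).
 { rewrite exch. rewrite <- (CsumL_box_restr N D M (fun i => Cmul (c i) (Cpsum (fun k => Cmul (q (combine e i) k) (RtoC (u ^ k))) D))).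
   rewrite <- CsumL_sub. apply CsumL_ext. intros; unfold G, z; change (lam_mono e x (RtoC (exp (- u)))) with (LM (combine e x) (RtoC (exp (- u)))); ring. lia.
   intros i Hl [k [Hk Hlt]]. rewrite (Cpsum_ext _ (fun _ => Czero)), Cpsum_zero. ring.
   intros j Hj. rewrite Hvan; auto. ring. pose proof (in_le_list_sum k i Hk). lia. }
 rewrite Heq. eapply Rle_trans. apply CsumL_norm.
 set (h := fun i => Cnorm (Cmul (c i) (lam_mono e i zh)) * (2 * u * Emax) ^ D
               + (if (list_sum i <? D)%nat then Cnorm (G i u) else 0)).
 apply Rle_trans with (RsumL (boxidx N M) h).
 { apply RsumL_le. intros i Hi. unfold h. pose proof (box_length _ _ _ Hi) as Hl.
   destruct (Nat.ltb_spec (list_sum i) D).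
   - assert (0 <= Cnorm (Cmul (c i) (lam_mono e i zh)) * (2 * u * Emax) ^ D).
     { apply Rmult_le_pos. apply Cnorm_ge0. apply pow_le; lra. } lra.
   - rewrite Rplus_0_r. unfold G. rewrite (Cpsum_ext _ (fun _ => Czero)), Cpsum_zero.
     2:{ intros j Hj. rewrite Hvan; auto. ring. lia. }
     replace (Csub (LM (combine e i) (RtoC (exp (- u)))) Czero) with (LM (combine e i) (RtoC (exp (- u)))) by ring.
     rewrite !Cnorm_mul. rewrite Rmult_assoc. apply Rmult_le_compat_l. apply Cnorm_ge0.
     assert (HLs : Lsum (combine e i) = list_sum i) by (apply Lsum_combine; destruct Hev as [_ [He _]]; lia).
     pose proof (LM_bound_u (combine e i) u Emax ltac:(lra) (HFl i)) as B1.
     pose proof (LM_bound_half (combine e i)) as B2.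
     assert (B2' : (1/2) ^ Lsum (combine e i) <= Cnorm (lam_mono e i zh)).
     { apply B2. eapply Forall_impl; [|apply HFl]. intros a [? ?]; auto. }
     change (lam_mono e i zh) with (LM (combine e i) zh) in B2'.
     change (lam_mono e i zh) with (LM (combine e i) zh).
     rewrite HLs in B1, B2'.
     replace ((u * Emax) ^ list_sum i) with ((2 * u * Emax) ^ list_sum i * (1/2) ^ list_sum i) in B1
       by (rewrite <- Rpow_mult_distr; f_equal; field).
     assert ((2 * u * Emax) ^ list_sum i <= (2 * u * Emax) ^ D) by (apply pow_decr; [lra|lia]).
     assert (0 <= (2 * u * Emax) ^ list_sum i) by (apply pow_le; lra).
     assert (0 <= (1/2) ^ list_sum i) by (apply pow_le; lra).
     eapply Rle_trans. apply B1. rewrite Rmult_comm.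
     apply Rmult_le_compat; auto. }
 unfold h. rewrite RsumL_add.
 assert (E1 : RsumL (boxidx N M) (fun i => Cnorm (Cmul (c i) (lam_mono e i zh)) * (2 * u * Emax) ^ D)
     <= A * ((2 * Emax) ^ D * u ^ D)).
 { rewrite (RsumL_scal_r (boxidx N M) ((2 * u * Emax) ^ D)).
   replace ((2 * Emax) ^ D * u ^ D) with ((2 * u * Emax) ^ D) by (rewrite <- Rpow_mult_distr; f_equal; ring).
   apply Rmult_le_compat_r. apply pow_le; lra. apply HA; lia. }
 assert (E2 : RsumL (boxidx N M) (fun i => if (list_sum i <? D)%nat then Cnorm (G i u) else 0) <= Cg * u ^ D).
 { rewrite (RsumL_box_restr N D M). 2: lia.
   2:{ intros i Hl [k [Hk Hlt]]. pose proof (in_le_list_sum k i Hk).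
       destruct (Nat.ltb_spec (list_sum i) D); auto. lia. }
   eapply Rle_trans. apply (RsumL_le _ _ (fun i => Cnorm (G i u))).
   intros i _. destruct (list_sum i <? D)%nat. lra. apply Cnorm_ge0.
   specialize (HGb u ltac:(lra)). rewrite Cnorm_RtoC in HGb.
   eapply Rle_trans. apply Rle_abs. auto. }
 lra.
Qed.

Lemma key k : (k < D)%nat -> Sk k = b k.
Proof. intros Hk.
 assert (Hz : Csub (Sk k) (b k) = Czero).
 2:{ replace (Sk k) with (Cadd (Csub (Sk k) (b k)) (b k)) by ring. rewrite Hz; ring. }
 apply (poly_zero D (fun k => Csub (Sk k) (b k))); auto.
 destruct Hb as [rho [Hrho Hser]].
 set (Phi := fun u => Cmul (Cpow u nu) (F (Cexp (Copp u)))).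
 assert (HB := series_tail b rho Phi D Hrho Hser).
 apply (BigoC_ext _ _ (fun u => Cadd (Cmul (Copp Cone) (Csub (K (RtoC (exp (- u)))) (Cpsum (fun k => Cmul (Sk k) (RtoC (u ^ k))) D)))
    (Csub (Phi (RtoC u)) (Cpsum (fun k => Cmul (b k) (Cpow (RtoC u) k)) D)))).
 2: { apply BigoC_add. apply BigoC_scal. apply partA. apply HB. }
 intros u Hu. unfold Phi. rewrite <- HKu by auto.
 rewrite (Cpsum_ext _ (fun k => Csub (Cmul (Sk k) (RtoC (u ^ k))) (Cmul (b k) (RtoC (u ^ k))))).
 rewrite Cpsum_sub. rewrite (Cpsum_ext (fun k => Cmul (b k) (Cpow (RtoC u) k)) (fun k => Cmul (b k) (RtoC (u ^ k)))).
 ring. intros; rewrite Cpow_RtoC; auto. intros; ring. Qed.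
End Key.

Lemma inv_fact_qc m : / INR (Factorial.fact m) * / qc m = (-1) ^ m.
Proof. unfold qc. assert (Hsq : (-1) ^ m * (-1) ^ m = 1) by (rewrite <- Rpow_mult_distr; replace (-1 * -1) with 1 by ring; apply pow1).
 assert (INR (Factorial.fact m) <> 0) by apply INR_fact_neq_0.
 assert ((-1) ^ m <> 0) by (apply pow_nonzero; lra).
 field_simplify; auto. rewrite <- Hsq at 1. field. auto. Qed.

Theorem mainTheorem4 :
  forall (a : nat -> Cplx) (F : Cplx -> Cplx) (nu : nat) (r : R) (L : Cplx),
    tame_data a F nu r L ->
  forall (N : nat) (e : list nat) (c : list nat -> Cplx) (W : Cplx -> Prop) (K : Cplx -> Cplx),
    exponent_vector N e ->
    nbhd_0_1 W ->
    (forall z, W z -> in_disk z \/ in_ball1 r z) ->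
    multi_conv_abs_unif N (fun i z => Cmul (c i) (lam_mono e i z)) W K ->
    (forall z, W z -> z <> Cone ->
       K z = Cmul (Cpow (RtoC (-1)) nu) (Cmul (Cpow (Cln z) nu) (F z))) ->
  forall b : nat -> Cplx, taylor_coeffs_at0 F nu b ->
  forall p : list Cplx,
    in_bernoulli_domain N e c (Peval p) /\
    bernoulli_op_value N e c (Peval p) (todd_op b p).
Proof.
 intros a F nu r L _ N e c W K Hev HW _ HM HK b Hb p.
 set (D := S (length p)).
 assert (HKu : forall u, 0 < u -> K (RtoC (exp (- u))) = Cmul (Cpow (RtoC u) nu) (F (Cexp (Copp (RtoC u))))).
 { intros u Hu. assert (He1 : exp (- u) < 1) by (rewrite <- exp_0; apply exp_increasing; lra).
   rewrite HK. rewrite Cln_pos by apply exp_pos. rewrite ln_exp, Cexp_negR, !Cpow_RtoC.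
   replace (Cmul (RtoC ((-1) ^ nu)) (Cmul (RtoC ((- u) ^ nu)) (F (RtoC (exp (- u))))))
     with (Cmul (RtoC ((-1) ^ nu * (- u) ^ nu)) (F (RtoC (exp (- u))))) by (rewrite RtoC_mul; ring).
   rewrite <- Rpow_mult_distr. replace (-1 * - u) with u by ring. reflexivity.
   apply HW. split. apply exp_pos. lra.
   intros Heq. injection Heq. lra. }
 assert (Hkey := key N e c W K F nu b D Hev HW HM HKu Hb).
 assert (HlenE : length e = N) by (destruct Hev as [_ [He _]]; auto).
 assert (Tz : forall i t, length i = N -> (exists k, In k i /\ (D < k)%nat) ->
    Cmul (c i) (Delta_multi e i (Peval p) t) = Czero).
 { intros i t Hl [k [Hk Hlt]]. change (Delta_multi e i (Peval p) t) with (DM (combine e i) (Peval p) t).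
   rewrite DP_taylor. rewrite (Cpsum_ext _ (fun _ => Czero)), Cpsum_zero. ring.
   intros m Hm. rewrite mu_from_q, (Hvan N e Hev). ring. auto.
   pose proof (in_le_list_sum k i Hk). fold D in Hm. lia. }
 assert (Hsum : forall t, CsumL (boxidx N D) (fun i => Cmul (c i) (Delta_multi e i (Peval p) t)) = todd_op b p t).
 { intros t. rewrite (CsumL_ext _ _ (fun i => Cpsum (fun m => Cmul (c i) (Cmul (Cmul (RtoC (/ INR (Factorial.fact m))) (Peval (Pderiv_n m p) t)) (mu (combine e i) m))) D)).
   2:{ intros i _. change (Delta_multi e i (Peval p) t) with (DM (combine e i) (Peval p) t).
       rewrite DP_taylor, Cpsum_scal. reflexivity. }
   rewrite CsumL_Cpsum. unfold todd_op. apply Cpsum_ext. intros m Hm.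
   rewrite (CsumL_ext _ _ (fun i => Cmul (Cmul (Cmul (RtoC (/ INR (Factorial.fact m))) (Peval (Pderiv_n m p) t)) (RtoC (/ qc m))) (Cmul (c i) (q (combine e i) m)))).
   2:{ intros i _. rewrite mu_from_q. ring. }
   rewrite CsumL_scal. fold (Sk N e c D m). rewrite Hkey by auto.
   rewrite Cpow_RtoC, <- inv_fact_qc, RtoC_mul. ring. }
 assert (Hval : bernoulli_op_value N e c (Peval p) (todd_op b p)).
 { intros t0 Ht0. exists 1. split. lra. split.
   - intros eps Heps. exists D. intros M' x HM' Hx.
     rewrite (RsumL_box_restr N D M'); auto. lra.
     intros i Hl Hbig. rewrite Tz; auto. apply Cnorm_zero.
   - intros x Hx eps Heps. exists D. intros n Hn.
     rewrite (CsumL_box_restr N D n); auto. rewrite Hsum.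
     replace (Csub (todd_op b p x) (todd_op b p x)) with Czero by ring. rewrite Cnorm_zero; lra. }
 split; auto. exists (todd_op b p); auto.
Qed.
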